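(* Let $G_i=(V_i,E_i)$ be a graph and $S_i\subseteq V_i$, $i\in\{1,2\}$, and let $k,k'$ be integers. If $S_1\times S_2$ is a $k$-daf set in $G_1\times G_2$ and $S_2$ is a defensive $k'$-alliance in $G_2$, then $S_1$ is a $(k-k')$-daf set in $G_1$.
   Context: All graphs are finite and simple. For a graph $G=(V,E)$, a set $S\subseteq V$ and $v\in V$, let $\delta_S(v)=|\{u\in S: uv\in E\}|$ and $\overline{S}=V\setminus S$. For an integer $k$, a non-empty set $S\subseteq V$ is a defensive $k$-alliance if $\delta_S(v)\ge \delta_{\overline S}(v)+k$ for every $v\in S$. A set $X\subseteq V$ is a defensive $k$-alliance free set ($k$-daf set) if no defensive $k$-alliance $S$ satisfies $S\subseteq X$. The Cartesian product $G_1\times G_2$ of $G_1=(V_1,E_1)$, $G_2=(V_2,E_2)$ has vertex set $V_1\times V_2$, with $(a,b)$ adjacent to $(c,d)$ iff either $a=c$ and $bd\in E_2$, or $b=d$ and $ac\in E_1$. *)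

(* Defs.v *)
From mathcomp Require Import all_boot all_order all_algebra.
Set Implicit Arguments. Unset Strict Implicit. Unset Printing Implicit Defensive.
Import GRing.Theory Num.Theory.

Definition simple_graph (T : finType) (e : rel T) : Prop :=
  symmetric e /\ irreflexive e.

Definition deg_in (T : finType) (e : rel T) (S : {set T}) (v : T) : nat :=
  #|[set u in S | e u v]|.

Definition def_alliance (T : finType) (e : rel T) (k : int) (S : {set T}) : Prop :=
  S != set0 /\
  forall v, v \in S -> ((deg_in e (~: S) v)%:Z + k <= (deg_in e S v)%:Z)%R.

Definition daf (T : finType) (e : rel T) (k : int) (X : {set T}) : Prop :=
  forall S : {set T}, S \subset X -> ~ def_alliance e k S.

Definition cart_rel (T1 T2 : finType) (e1 : rel T1) (e2 : rel T2) : rel (T1 * T2) :=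
  fun x y => ((x.1 == y.1) && e2 x.2 y.2) || ((x.2 == y.2) && e1 x.1 y.1).

(* Main.v *)
Require Import Defs.
From mathcomp Require Import all_boot all_order all_algebra.
From mathcomp Require Import zify.
Import GRing.Theory Num.Theory.

Lemma deg_cart (T1 T2 : finType) (e1 : rel T1) (e2 : rel T2) (X : {set T1 * T2}) a b :
  irreflexive e1 -> irreflexive e2 ->
  deg_in (cart_rel e1 e2) X (a, b) =
  (#|[set u2 | ((a, u2) \in X) && e2 u2 b]| + #|[set u1 | ((u1, b) \in X) && e1 u1 a]|)%N.
Proof.
move=> i1 i2; rewrite /deg_in.
have -> : [set u in X | cart_rel e1 e2 u (a, b)] =
  (fun u2 => (a, u2)) @: [set u2 | ((a, u2) \in X) && e2 u2 b] :|:
  (fun u1 => (u1, b)) @: [set u1 | ((u1, b) \in X) && e1 u1 a].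
  apply/setP => -[u1 u2]; rewrite !inE /cart_rel /=.
  apply/andP/orP.
  - case=> Hx /orP [/andP [/eqP E H]|/andP [/eqP E H]]; subst.
      by left; apply/imsetP; exists u2 => //; rewrite inE Hx.
    by right; apply/imsetP; exists u1 => //; rewrite inE Hx.
  - case=> /imsetP [y]; rewrite inE => /andP [Hx H] [-> ->]; split => //.
      by rewrite eqxx H.
    by rewrite eqxx H orbT.
rewrite cardsU !card_imset; first last.
- by move=> x y [].
- by move=> x y [].
suff -> : (fun u2 => (a, u2)) @: [set u2 | ((a, u2) \in X) && e2 u2 b] :&:
  (fun u1 => (u1, b)) @: [set u1 | ((u1, b) \in X) && e1 u1 a] = set0.
  by rewrite cards0 subn0.
apply/setP => -[u1 u2]; rewrite !inE.
apply/negbTE/negP => /andP [/imsetP [y]]; rewrite inE => /andP [_ H] [_ ->].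
move=> /imsetP [z]; rewrite inE => /andP [_ _] [_ E].
by subst y; rewrite i2 in H.
Qed.

Theorem theorem2 (T1 T2 : finType) (e1 : rel T1) (e2 : rel T2)
  (S1 : {set T1}) (S2 : {set T2}) (k k' : int) :
  simple_graph e1 -> simple_graph e2 ->
  daf (cart_rel e1 e2) k (setX S1 S2) ->
  def_alliance e2 k' S2 ->
  daf e1 (k - k')%R S1.
Proof.
move=> [_ i1] [_ i2] Hd [ne2 H2] S sub [neS HS].
apply: (Hd (setX S S2)).
  apply/subsetP => -[x y]; rewrite !inE /= => /andP [hx ->].
  by rewrite (subsetP sub _ hx).
split.
  case/set0Pn: neS => a Ha; case/set0Pn: ne2 => b Hb.
  by apply/set0Pn; exists (a, b); rewrite inE Ha Hb.
move=> [a b]; rewrite inE /= => /andP [Ha Hb].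
rewrite !deg_cart //.
have E1 : #|[set u2 | ((a, u2) \in setX S S2) && e2 u2 b]| = deg_in e2 S2 b.
  by apply: eq_card => u; rewrite !inE Ha.
have E2 : #|[set u1 | ((u1, b) \in setX S S2) && e1 u1 a]| = deg_in e1 S a.
  by apply: eq_card => u; rewrite !inE Hb andbT.
have E3 : #|[set u2 | ((a, u2) \in ~: setX S S2) && e2 u2 b]| = deg_in e2 (~: S2) b.
  by apply: eq_card => u; rewrite !inE Ha.
have E4 : #|[set u1 | ((u1, b) \in ~: setX S S2) && e1 u1 a]| = deg_in e1 (~: S) a.
  by apply: eq_card => u; rewrite !inE Hb andbT.
rewrite E1 E2 E3 E4 !PoszD.
have := HS a Ha; have := H2 b Hb.
move: (Posz _) (Posz _) (Posz _) (Posz _) => x y z w h1 h2.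
lia.
Qed.
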